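(* Let $0<\alpha\le 2\pi/3$ and let $u,v\in V$ with $(u,v)\in N_\alpha$. Then there is a path $u_0,\dots,u_m$ with $u_0=u$, $u_m=v$ and $\{u_i,u_{i+1}\}\in E^-_\alpha$ for all $i=0,\dots,m-1$.
   Context: Let $V$ be a finite set of pairwise distinct points (nodes) in the Euclidean plane, $d$ the Euclidean distance, and $R>0$. Fix a finite increasing sequence of radius levels $0<r_1<r_2<\dots<r_k=R$. For $u\in V$ and $1\le i\le k$ let $S_i(u)=\{v\in V\setminus\{u\}: d(u,v)\le r_i\}$. For $0<\alpha<2\pi$, a closed cone of width $\alpha$ with apex $u$ is a set $\{u+t(\cos\varphi,\sin\varphi): t\ge 0,\ \varphi\in[\theta-\alpha/2,\theta+\alpha/2]\}$ for some $\theta$. A finite set $S\subseteq V\setminus\{u\}$ has an $\alpha$-gap (at $u$) if some closed cone of width $\alpha$ with apex $u$ contains no node of $S$ (in particular $\emptyset$ has an $\alpha$-gap). The algorithm CBTC($\alpha$) assigns to each $u$ the index $i_u$ = the least $i\in\{1,\dots,k\}$ such that $S_i(u)$ has no $\alpha$-gap, or $i_u=k$ if there is no such $i$; set $N_\alpha(u)=S_{i_u}(u)$ and $N_\alpha=\{(u,v): v\in N_\alpha(u)\}$ (a directed relation, not necessarily symmetric). Let $E^-_\alpha=\{\{u,v\}: (u,v)\in N_\alpha\text{ and }(v,u)\in N_\alpha\}$. *)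

(* Defs.v *)
From Stdlib Require Import Reals List.
Import ListNotations.
Open Scope R_scope.

Definition point := (R * R)%type.

Definition dist (p q : point) : R :=
  sqrt ((fst p - fst q) ^ 2 + (snd p - snd q) ^ 2).

(* Radius levels r_1 < ... < r_k, stored 0-based in a list rs
   (rs = [r_1; ...; r_k]); R = r_k is the last element. *)
Definition radius_levels_ok (rs : list R) : Prop :=
  rs <> [] /\
  (forall i, (i < length rs)%nat -> 0 < nth i rs 0) /\
  (forall i j, (i < j < length rs)%nat -> nth i rs 0 < nth j rs 0).

Definition Sset (V : list point) (rs : list R) (i : nat) (u : point) (w : point) : Prop :=
  In w V /\ w <> u /\ dist u w <= nth i rs 0.

Definition in_cone (u : point) (alpha theta : R) (w : point) : Prop :=
  exists t phi, 0 <= t /\ theta - alpha / 2 <= phi <= theta + alpha / 2 /\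
    w = (fst u + t * cos phi, snd u + t * sin phi).

Definition has_gap (S : point -> Prop) (u : point) (alpha : R) : Prop :=
  exists theta, forall w, S w -> ~ in_cone u alpha theta w.

Definition cbtc_index (V : list point) (rs : list R) (alpha : R) (u : point) (i : nat) : Prop :=
  ((i < length rs)%nat /\ ~ has_gap (Sset V rs i u) u alpha /\
     forall j, (j < i)%nat -> has_gap (Sset V rs j u) u alpha)
  \/
  (i = (length rs - 1)%nat /\
     forall j, (j < length rs)%nat -> has_gap (Sset V rs j u) u alpha).

Definition N_alpha (V : list point) (rs : list R) (alpha : R) (u v : point) : Prop :=
  In u V /\ exists i, cbtc_index V rs alpha u i /\ Sset V rs i u v.

Definition E_minus (V : list point) (rs : list R) (alpha : R) (u v : point) : Prop :=
  N_alpha V rs alpha u v /\ N_alpha V rs alpha v u.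

(* Main.v *)
Require Import Defs.
From Stdlib Require Import Reals List.
Import ListNotations.
Open Scope R_scope.
From Stdlib Require Import Lra Lia Psatz Classical Relations.
Import Defs.

Lemma least_ex (P : nat -> Prop) :
  (exists n, P n) -> exists n, P n /\ forall m, (m < n)%nat -> ~ P m.
Proof.
  intros [n Hn]. revert Hn.
  induction n as [n IH] using (well_founded_induction Wf_nat.lt_wf).
  intros Hn.
  destruct (classic (exists m, (m < n)%nat /\ P m)) as [[m [Hm Pm]]|Hno].
  - exact (IH m Hm Pm).
  - exists n; split; auto. intros m Hm Pm; apply Hno; eauto.
Qed.

Lemma dist_sym p q : dist p q = dist q p.
Proof. unfold dist. f_equal. ring. Qed.

Lemma dist_sq p q : dist p q ^ 2 = (fst p - fst q) ^ 2 + (snd p - snd q) ^ 2.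
Proof. unfold dist. apply pow2_sqrt. apply Rplus_le_le_0_compat; apply pow2_ge_0. Qed.

Lemma dist_nonneg p q : 0 <= dist p q.
Proof. unfold dist. apply sqrt_pos. Qed.

Lemma dist_pos p q : p <> q -> 0 < dist p q.
Proof.
  intros H. destruct (Req_dec (dist p q) 0) as [E|E].
  - exfalso. apply H. pose proof (dist_sq p q) as S. rewrite E in S.
    destruct p as [p1 p2], q as [q1 q2]; simpl in S.
    pose proof (pow2_ge_0 (p1 - q1)). pose proof (pow2_ge_0 (p2 - q2)).
    assert (A1 : (p1 - q1) ^ 2 = 0) by lra. assert (A2 : (p2 - q2) ^ 2 = 0) by lra.
    assert (p1 - q1 = 0) by (destruct (Req_dec (p1 - q1) 0); [auto|exfalso; eapply pow_nonzero; eauto]).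
    assert (p2 - q2 = 0) by (destruct (Req_dec (p2 - q2) 0); [auto|exfalso; eapply pow_nonzero; eauto]).
    f_equal; lra.
  - pose proof (dist_nonneg p q); lra.
Qed.

Lemma polar (x y : R) : 0 < x ^ 2 + y ^ 2 ->
  exists th, x = sqrt (x ^ 2 + y ^ 2) * cos th /\ y = sqrt (x ^ 2 + y ^ 2) * sin th.
Proof.
  intros H. set (a := sqrt (x ^ 2 + y ^ 2)).
  assert (Ha : 0 < a) by (apply sqrt_lt_R0; lra).
  assert (Ha2 : a ^ 2 = x ^ 2 + y ^ 2) by (apply pow2_sqrt; lra).
  set (c := x / a).
  assert (Hc : -1 <= c <= 1).
  { unfold c. assert (x ^ 2 <= a ^ 2) by nra.
    split.
    - apply (Rmult_le_reg_r a); [lra|]. unfold Rdiv. rewrite Rmult_assoc, Rinv_l by lra. nra.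
    - apply (Rmult_le_reg_r a); [lra|]. unfold Rdiv. rewrite Rmult_assoc, Rinv_l by lra. nra. }
  assert (Hxc : x = a * c) by (unfold c; field; lra).
  assert (Hs : sin (acos c) = Rabs y / a).
  { rewrite sin_acos by lra.
    assert (1 - c² = (Rabs y / a) ^ 2).
    { unfold Rsqr. pose proof (pow2_abs y) as E. unfold c.
      generalize dependent (Rabs y). intros r E.
      field_simplify_eq; [| lra]. nra. }
    rewrite H0. apply sqrt_pow2.
    apply Rmult_le_pos; [apply Rabs_pos | left; apply Rinv_0_lt_compat; lra]. }
  destruct (Rle_dec 0 y) as [Hy|Hy].
  - exists (acos c). rewrite cos_acos by lra. split; [exact Hxc|].
    rewrite Hs, Rabs_right by lra. field. lra.
  - exists (- acos c). rewrite cos_neg, sin_neg, cos_acos by lra. split; [exact Hxc|].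
    rewrite Hs, Rabs_left by lra. field. lra.
Qed.

Lemma cos_half (d alpha : R) : 0 < alpha <= 2 * PI / 3 ->
  - (alpha / 2) <= d <= alpha / 2 -> 1 / 2 <= cos d.
Proof.
  intros Ha Hd. pose proof PI_RGT_0. rewrite <- cos_PI3.
  destruct (Rle_dec 0 d).
  - apply cos_decr_1; lra.
  - apply Rnot_le_lt in n. rewrite <- (cos_neg d). apply cos_decr_1; lra.
Qed.

Lemma geom (u v w : point) (alpha th t phi : R) :
  0 < alpha <= 2 * PI / 3 ->
  fst u - fst v = dist v u * cos th ->
  snd u - snd v = dist v u * sin th ->
  0 <= t -> th - alpha / 2 <= phi <= th + alpha / 2 ->
  w = (fst v + t * cos phi, snd v + t * sin phi) ->
  w <> v -> dist v w < dist v u ->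
  dist u w < dist u v.
Proof.
  intros Hal Hx Hy Ht Hphi Hw Hwv Hlt.
  assert (Hc : 1 / 2 <= cos (phi - th)) by (apply (cos_half _ alpha); lra).
  rewrite cos_minus in Hc.
  set (a := dist v u) in *.
  subst w.
  set (w := (fst v + t * cos phi, snd v + t * sin phi)) in *.
  pose proof (dist_sq v w) as Svw. pose proof (dist_sq u w) as Suw.
  unfold w in Svw at 2 3. unfold w in Suw at 2 3. cbn [fst snd] in Svw, Suw.
  pose proof (sin2_cos2 phi) as P1. pose proof (sin2_cos2 th) as P2. unfold Rsqr in P1, P2.
  assert (Et : dist v w ^ 2 = t ^ 2) by (rewrite Svw;
    replace ((fst v - (fst v + t * cos phi)) ^ 2 + (snd v - (snd v + t * sin phi)) ^ 2)
      with (t ^ 2 * (sin phi * sin phi + cos phi * cos phi)) by ring; rewrite P1; ring).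
  assert (Ht' : dist v w = t).
  { pose proof (dist_nonneg v w). assert ((dist v w - t) * (dist v w + t) = 0) by nra.
    destruct (Rmult_integral _ _ H0); [lra|].
    assert (dist v w = 0 /\ t = 0) as [-> ->] by lra; reflexivity. }
  assert (Htp : 0 < t) by (rewrite <- Ht'; apply dist_pos; auto).
  assert (Hta : t < a) by lra.
  assert (E2 : dist u w ^ 2 = a ^ 2 + t ^ 2 - 2 * a * t * (cos phi * cos th + sin phi * sin th)).
  { rewrite Suw.
    replace (fst u - (fst v + t * cos phi)) with (a * cos th - t * cos phi) by lra.
    replace (snd u - (snd v + t * sin phi)) with (a * sin th - t * sin phi) by lra.
    nra. }
  assert (Hat : a * t * (1/2) <= a * t * (cos phi * cos th + sin phi * sin th)).
  { apply Rmult_le_compat_l; [|lra]. apply Rmult_le_pos; lra. }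
  assert (Htt : t * (t - a) < 0) by (rewrite Rmult_comm; apply Rmult_neg_pos; lra).
  assert (Hlt2 : dist u w ^ 2 < a ^ 2) by lra.
  rewrite dist_sym with (p := u) (q := v). fold a.
  pose proof (dist_nonneg u w). nra.
Qed.

Section Main.
Variables (V : list point) (rs : list R) (alpha : R).
Hypothesis Hrs : radius_levels_ok rs.
Hypothesis Halpha : 0 < alpha <= 2 * PI / 3.

Lemma nth_mono i j : (i <= j < length rs)%nat -> nth i rs 0 <= nth j rs 0.
Proof.
  intros H. destruct Hrs as [_ [_ M]].
  destruct (Nat.eq_dec i j) as [->|Hne]; [lra|]. left; apply M; lia.
Qed.

Lemma idx_lt u i : cbtc_index V rs alpha u i -> (i < length rs)%nat.
Proof.
  destruct Hrs as [Hne _]. intros [[H _]|[-> _]]; auto.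
  destruct rs; [congruence|simpl; lia].
Qed.

Lemma idx_exists u : exists i, cbtc_index V rs alpha u i.
Proof.
  destruct (classic (exists j, (j < length rs)%nat /\ ~ has_gap (Sset V rs j u) u alpha))
    as [Hex|Hno].
  - destruct (least_ex _ Hex) as [n [[Hn Hg] Hm]].
    exists n. left. split; [auto|split; [auto|]].
    intros j Hj. apply NNPP. intro G. apply (Hm j Hj). split; [lia|auto].
  - exists (length rs - 1)%nat. right. split; [auto|].
    intros j Hj. apply NNPP. intro G. apply Hno. eauto.
Qed.

Lemma step u v : N_alpha V rs alpha u v -> ~ N_alpha V rs alpha v u ->
  exists w, N_alpha V rs alpha u w /\ N_alpha V rs alpha v w /\
    dist u w < dist u v /\ dist v w < dist u v.
Proof.
  intros Huv Hvu.
  destruct Huv as [HuV [iu [Hiu [HvV [Hvu' Hd]]]]].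
  destruct (idx_exists v) as [iv Hiv].
  assert (Hfar : nth iv rs 0 < dist v u).
  { apply Rnot_le_lt. intro Hle. apply Hvu. split; [auto|]. exists iv. split; auto.
    split; [auto|split; auto]. }
  pose proof (idx_lt _ _ Hiu) as Hiul.
  destruct Hiv as [Hiv1|[Hiv Hall]].
  2:{ exfalso. subst iv. assert (nth iu rs 0 <= nth (length rs - 1) rs 0)
        by (apply nth_mono; lia). rewrite dist_sym in Hfar. lra. }
  assert (Hpos : 0 < (fst u - fst v) ^ 2 + (snd u - snd v) ^ 2).
  { rewrite <- dist_sq. pose proof (dist_pos u v (fun e => Hvu' (eq_sym e))). nra. }
  pose proof Hiv1 as [Hivl [Hng _]].
  destruct (polar _ _ Hpos) as [th [Hx Hy]].
  assert (Ed : sqrt ((fst u - fst v) ^ 2 + (snd u - snd v) ^ 2) = dist v u).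
  { unfold dist. f_equal. ring. }
  rewrite Ed in Hx, Hy.
  assert (Hex : exists w, Sset V rs iv v w /\ in_cone v alpha th w).
  { apply NNPP. intro N. apply Hng. exists th. intros w Sw Cw. apply N; eauto. }
  destruct Hex as [w [[HwV [Hwv Hdw]] [t [phi [Ht [Hphi Hw]]]]]].
  assert (Hvw : dist v w < dist v u) by lra.
  assert (Huw : dist u w < dist u v) by (eapply geom; eauto).
  assert (Hwu : w <> u) by (intro; subst; lra).
  exists w. rewrite (dist_sym v u) in Hvw.
  split; [|split; [|split; auto]].
  - split; [auto|]. exists iu. split; auto. split; [auto|split; [auto|lra]].
  - split; [auto|]. exists iv.     split; [left; auto|]. split; [auto|split; auto].
Qed.

Definition meas (u v : point) : nat :=
  length (filter (fun p => if Rlt_dec (dist (fst p) (snd p)) (dist u v) then true else false)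
    (list_prod V V)).

Lemma filter_le {A} (f g : A -> bool) (l : list A) :
  (forall x, In x l -> f x = true -> g x = true) ->
  (length (filter f l) <= length (filter g l))%nat.
Proof.
  induction l as [|y l IH]; simpl; intros H; [lia|].
  assert (IH' := IH (fun x Hx => H x (or_intror Hx))).
  destruct (f y) eqn:Ef; destruct (g y) eqn:Eg; simpl; try lia.
  rewrite (H y (or_introl eq_refl) Ef) in Eg; discriminate.
Qed.

Lemma filter_lt {A} (f g : A -> bool) (l : list A) :
  (forall x, In x l -> f x = true -> g x = true) ->
  forall x, In x l -> g x = true -> f x = false ->
  (length (filter f l) < length (filter g l))%nat.
Proof.
  induction l as [|y l IH]; simpl; intros H x Hx Hg Hf; [contradiction|].
  assert (H' : forall z, In z l -> f z = true -> g z = true) by (intros; apply H; auto).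
  destruct Hx as [<-|Hx].
  - rewrite Hg, Hf. simpl. pose proof (filter_le f g l H'). lia.
  - assert (IH' := IH H' x Hx Hg Hf).
    destruct (f y) eqn:Ef; destruct (g y) eqn:Eg; simpl; try lia.
    rewrite (H y (or_introl eq_refl) Ef) in Eg; discriminate.
Qed.

Lemma meas_lt u v a b : In a V -> In b V -> dist a b < dist u v -> (meas a b < meas u v)%nat.
Proof.
  intros Ha Hb Hd. unfold meas.
  apply filter_lt with (x := (a, b)).
  - intros [p q] _. simpl. destruct (Rlt_dec (dist p q) (dist a b)); [|discriminate].
    destruct (Rlt_dec (dist p q) (dist u v)); [auto|lra].
  - apply in_prod; auto.
  - simpl. destruct (Rlt_dec (dist a b) (dist u v)); [auto|lra].
  - simpl. destruct (Rlt_dec (dist a b) (dist a b)); [lra|auto].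
Qed.

Lemma E_sym a b : E_minus V rs alpha a b -> E_minus V rs alpha b a.
Proof. intros [H1 H2]; split; auto. Qed.

Lemma crt_sym a b : clos_refl_trans point (E_minus V rs alpha) a b ->
  clos_refl_trans point (E_minus V rs alpha) b a.
Proof.
  induction 1.
  - apply rt_step, E_sym; auto.
  - apply rt_refl.
  - eapply rt_trans; eauto.
Qed.

Lemma main_ind n : forall u v, (meas u v < n)%nat -> N_alpha V rs alpha u v ->
  clos_refl_trans point (E_minus V rs alpha) u v.
Proof.
  induction n as [|n IH]; intros u v Hm Huv; [lia|].
  destruct (classic (N_alpha V rs alpha v u)) as [Hvu|Hvu].
  - apply rt_step. split; auto.
  - destruct (step u v Huv Hvu) as [w [Huw [Hvw [Hd1 Hd2]]]].
    assert (HuV : In u V) by apply Huv.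
    assert (HvV : In v V) by apply Hvw.
    assert (HwV : In w V) by (destruct Huw as [_ [i [_ [Hw _]]]]; auto).
    apply rt_trans with w.
    + apply IH; auto. pose proof (meas_lt u v u w HuV HwV Hd1). lia.
    + apply crt_sym. apply IH; auto.
      assert (dist v w < dist u v) by auto.
      pose proof (meas_lt u v v w HvV HwV Hd2). lia.
Qed.
End Main.

Lemma last_indep {A} (l : list A) d1 d2 : l <> [] -> last l d1 = last l d2.
Proof.
  induction l as [|x l IH]; intros H; [congruence|].
  destruct l as [|y l']; [reflexivity|]. simpl. simpl in IH. apply IH. discriminate.
Qed.

Lemma path_of (Rel : point -> point -> Prop) x z : clos_refl_trans_1n point Rel x z ->
  exists path : list point, path <> [] /\ hd x path = x /\ last path x = z /\
    (forall i, (S i < length path)%nat -> Rel (nth i path x) (nth (S i) path x)).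
Proof.
  induction 1 as [x|x y z Hxy Hyz IH].
  - exists [x]. repeat split; try discriminate. intros i Hi; simpl in Hi; lia.
  - destruct IH as [p [Hp [Hh [Hl Hn]]]].
    destruct p as [|y0 p']; [congruence|]. simpl in Hh. subst y0.
    exists (x :: y :: p'). split; [discriminate|split; [reflexivity|split]].
    + change (last (x :: y :: p') x) with (last (y :: p') x).
      rewrite (last_indep _ x y); [auto|discriminate].
    + intros [|k] Hk.
      * simpl. exact Hxy.
      * change (nth (S k) (x :: y :: p') x) with (nth k (y :: p') x).
        change (nth (S (S k)) (x :: y :: p') x) with (nth (S k) (y :: p') x).
        simpl in Hk.
        rewrite (nth_indep (y :: p') x y) by (simpl; lia).
        rewrite (nth_indep (y :: p') x y) by (simpl; lia).
        apply Hn. simpl; lia.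
Qed.

Theorem lemma3 (V : list point) (rs : list R) (alpha : R) (u v : point) :
  NoDup V ->
  radius_levels_ok rs ->
  0 < alpha <= 2 * PI / 3 ->
  In u V -> In v V ->
  N_alpha V rs alpha u v ->
  exists path : list point,
    path <> [] /\
    hd u path = u /\
    last path u = v /\
    (forall i, (S i < length path)%nat ->
       E_minus V rs alpha (nth i path u) (nth (S i) path u)).
Proof.
  intros _ Hrs Hal HuV HvV Huv.
  apply path_of. apply clos_rt_rt1n.
  apply (main_ind V rs alpha Hrs Hal (S (meas V u v))); auto.
Qed.
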